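(* For every connected graph $\hat G$ on $n$ vertices with maximum degree $\Delta$ and treewidth $\mathrm{tw}$, $$\mathrm{OPT}(\hat G)=O\big(\Delta(\Delta+\mathrm{tw}\log n)\,n\log n\big).$$
   Context: Let $\hat G=(V,\hat E)$ be a connected unweighted graph with shortest-path metric $\hat\delta$. Let $\widehat{\mathit{NE}}$ be the set of unordered pairs $\{a,b\}$ of distinct vertices with $\{a,b\}\notin\hat E$. For $(u,v)\in V^2$, let $S_{u,v}$ be the set of $\{a,b\}\in\widehat{\mathit{NE}}$ such that $\hat\delta(u,a)+\hat\delta(b,v)+1<\hat\delta(u,v)$ or $\hat\delta(u,b)+\hat\delta(a,v)+1<\hat\delta(u,v)$. Define $\mathrm{OPT}(\hat G)$ as the minimum cardinality of a set $T\subseteq V\times V$ such that $\bigcup_{(u,v)\in T}S_{u,v}=\widehat{\mathit{NE}}$. Treewidth is defined via tree decompositions: the width of a decomposition is the maximum bag size minus one. *)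

(* Defs.v *)
From mathcomp Require Import all_boot.
Set Implicit Arguments. Unset Strict Implicit. Unset Printing Implicit Defensive.

Definition simple_graph (T : finType) (e : rel T) : Prop :=
  symmetric e /\ irreflexive e.

Definition connected_graph (T : finType) (e : rel T) : Prop :=
  forall u v : T, connect e u v.

Fixpoint ball (T : finType) (e : rel T) (u : T) (k : nat) : {set T} :=
  match k with
  | 0 => [set u]
  | k'.+1 => ball e u k' :|: [set y | [exists x in ball e u k', e x y]]
  end.

(* Shortest-path distance: least k such that v is within k steps of u
   (in a connected graph this is < #|T|; default #|T| otherwise). *)
Definition dist (T : finType) (e : rel T) (u v : T) : nat :=
  find (fun k => v \in ball e u k) (iota 0 #|T|).

(* Non-edges, as ordered pairs of distinct non-adjacent vertices
   (the conditions below are symmetric in the pair). *)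
Definition nonedges (T : finType) (e : rel T) : {set T * T} :=
  [set p : T * T | (p.1 != p.2) && ~~ e p.1 p.2].

Definition Sset (T : finType) (e : rel T) (u v : T) : {set T * T} :=
  [set p in nonedges e |
     (dist e u p.1 + dist e p.2 v + 1 < dist e u v) ||
     (dist e u p.2 + dist e p.1 v + 1 < dist e u v)].

Definition covers (T : finType) (e : rel T) (X : {set T * T}) : bool :=
  [forall p in nonedges e, [exists q in X, p \in Sset e q.1 q.2]].

(* OPT = minimum cardinality of a covering set of pairs (the full set of
   pairs always covers, so this is a genuine minimum). *)
Definition OPT (T : finType) (e : rel T) : nat :=
  \big[minn/#|[set: T * T]|]_(X : {set T * T} | covers e X) #|X|.

Definition max_degree (T : finType) (e : rel T) : nat :=
  \max_(v : T) #|[set w | e v w]|.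

Definition is_tree (I : finType) (r : rel I) : Prop :=
  [/\ symmetric r, irreflexive r, (forall i j : I, connect r i j) &
      (forall c : seq I, uniq c -> 2 < size c -> ~~ cycle r c)].

Definition tree_decomposition (T : finType) (e : rel T)
    (I : finType) (r : rel I) (B : I -> {set T}) : Prop :=
  [/\ is_tree r,
      (forall v : T, exists i, v \in B i),
      (forall u v : T, e u v -> exists i, (u \in B i) && (v \in B i)) &
      (forall v : T, forall i j : I, v \in B i -> v \in B j ->
          connect [rel a b | [&& r a b, v \in B a & v \in B b]] i j)].

Definition td_width (T : finType) (I : finType) (B : I -> {set T}) : nat :=
  (\max_(i : I) #|B i|) - 1.

Definition is_treewidth (T : finType) (e : rel T) (k : nat) : Prop :=
  (exists (I : finType) (r : rel I) (B : I -> {set T}),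
      tree_decomposition e r B /\ td_width B = k) /\
  (forall (I : finType) (r : rel I) (B : I -> {set T}),
      tree_decomposition e r B -> k <= td_width B).

(* Main.v *)
Require Import Defs.
From mathcomp Require Import all_boot zify.
Set Implicit Arguments. Unset Strict Implicit. Unset Printing Implicit Defensive.


Section Dist.
Variables (T : finType) (e : rel T).
Hypothesis esym : symmetric e.
Hypothesis eirr : irreflexive e.
Hypothesis econ : connected_graph e.

Lemma ball_mono u k m : k <= m -> ball e u k \subset ball e u m.
Proof.
elim: m => [|m IH]; first by rewrite leqn0 => /eqP->.
rewrite leq_eqVlt => /orP[/eqP->//|/IH H].
apply: subset_trans H _; rewrite /= subsetUl //.
Qed.

Lemma ball_comp u v w a b :
  v \in ball e u a -> w \in ball e v b -> w \in ball e u (a + b).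
Proof.
move=> Hv; elim: b w => [|b IH] w /=; first by rewrite addn0 inE => /eqP->.
rewrite addnS /= !inE => /orP[/IH->//|/existsP[x /andP[Hx Exw]]].
apply/orP; right; apply/existsP; exists x; rewrite Exw IH //.
Qed.

Lemma ball1 u v : e u v -> v \in ball e u 1.
Proof. move=> H; rewrite /= !inE; apply/orP; right; apply/existsP; exists u; by rewrite inE eqxx H. Qed.

Lemma ballS u k v :
  (v \in ball e u k.+1) = (v \in ball e u k) || [exists x in ball e u k, e x v].
Proof. by rewrite /= !inE. Qed.

Lemma ball0 u v : (v \in ball e u 0) = (v == u).
Proof. by rewrite /= inE. Qed.

Lemma ball_sym u v k : v \in ball e u k -> u \in ball e v k.
Proof.
elim: k v => [|k IH] v; first by rewrite !ball0 => /eqP->.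
rewrite ballS => /orP[/IH H'|/existsP[x /andP[Hx Exv]]].
  by rewrite ballS H'.
have Evx : e v x by rewrite esym.
by have := ball_comp (ball1 Evx) (IH _ Hx); rewrite add1n.
Qed.

Lemma path_ball u p : path e u p -> last u p \in ball e u (size p).
Proof.
elim: p u => [|x p IH] u /=; first by rewrite ball0.
move=> /andP[Eux Hp]; have := ball_comp (ball1 Eux) (IH _ Hp); by rewrite add1n.
Qed.

Lemma ball_path u k v : v \in ball e u k ->
  exists p, [/\ path e u p, last u p = v & size p <= k].
Proof.
elim: k v => [|k IH] v; first by rewrite ball0 => /eqP->; exists [::].
rewrite ballS => /orP[/IH [p [Hp Hl Hs]]|/existsP[x /andP[Hx Exv]]].
  by exists p; split => //; apply: leq_trans Hs _.
have [p [Hp Hl Hs]] := IH _ Hx.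
exists (rcons p v); rewrite rcons_path last_rcons size_rcons Hp Hl Exv; split => //.
Qed.

Lemma ball_ex u v : exists2 k, k < #|T| & v \in ball e u k.
Proof.
have /connectP[p Hp Hl] := econ u v.
rewrite Hl; case: (shortenP Hp) => p' Hp' Hu _.
exists (size p'); last exact: path_ball.
have := card_uniqP Hu; rewrite /= => Hc.
by have := max_card (mem (u :: p')); rewrite Hc.
Qed.

Definition sz := #|T|.

Lemma dist_ball u v : v \in ball e u (dist e u v).
Proof.
have [k Hk Hb] := ball_ex u v.
have Hh : has (fun k => v \in ball e u k) (iota 0 #|T|).
  by apply/hasP; exists k => //; rewrite mem_iota.
have := nth_find 0 Hh; rewrite nth_iota ?add0n //.
by have := Hh; rewrite has_find size_iota.
Qed.

Lemma dist_le u v k : v \in ball e u k -> dist e u v <= k.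
Proof.
move=> Hb; rewrite leqNgt; apply/negP => Hlt.
have Hsz : dist e u v <= #|T| by rewrite /dist -{2}(size_iota 0 #|T|) find_size.
have Hk : k < #|T| by apply: leq_trans Hlt Hsz.
have := before_find 0 Hlt; rewrite nth_iota // add0n Hb //.
Qed.

Lemma dist_leP u v k : (dist e u v <= k) = (v \in ball e u k).
Proof.
apply/idP/idP; last exact: dist_le.
move=> H; exact: (subsetP (ball_mono u H) _ (dist_ball u v)).
Qed.

Lemma dist_sym u v : dist e u v = dist e v u.
Proof.
by apply/eqP; rewrite eqn_leq !dist_leP; apply/andP; split; apply: ball_sym; apply: dist_ball.
Qed.

Lemma dist_tri u v w : dist e u w <= dist e u v + dist e v w.
Proof. by rewrite dist_leP; apply: ball_comp; apply: dist_ball. Qed.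

Lemma dist0 u v : (dist e u v == 0) = (u == v).
Proof. by rewrite -leqn0 dist_leP ball0 eq_sym. Qed.

Lemma distuu u : dist e u u = 0.
Proof. by apply/eqP; rewrite dist0. Qed.

Lemma dist1 u v : e u v -> dist e u v <= 1.
Proof. by move=> H; rewrite dist_leP ball1. Qed.

Lemma dist_le1 u v : dist e u v <= 1 -> (u == v) || e u v.
Proof.
rewrite dist_leP ballS ball0 eq_sym => /orP[->//|/existsP[x /andP[]]].
by rewrite ball0 => /eqP->->; rewrite orbT.
Qed.

Lemma dist_pred u v k : dist e u v = k.+1 -> exists2 w, e w v & dist e u w = k.
Proof.
move=> H; have := dist_ball u v; rewrite H ballS => /orP[Hb|/existsP[w /andP[Hw Ewv]]].
  by have := dist_le Hb; rewrite H ltnn.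
exists w => //; apply/eqP; rewrite eqn_leq dist_le //=.
have H2 := dist_tri u w v; have H3 := dist1 Ewv; rewrite H in H2; lia.
Qed.

Lemma path_dist u p : path e u p -> dist e u (last u p) <= size p.
Proof. by move=> /path_ball; rewrite -dist_leP. Qed.

End Dist.


Lemma card_bigcup_leq (I T : finType) (P : pred I) (F : I -> {set T}) :
  #|\bigcup_(i | P i) F i| <= \sum_(i | P i) #|F i|.
Proof.
apply: (big_ind2 (fun (A : {set T}) n => #|A| <= n)) => //; first by rewrite cards0.
move=> A m B k H1 H2; apply: leq_trans (leq_add H1 H2).
by rewrite -cardsUI leq_addr.
Qed.

Section Cover.
Variables (T : finType) (e : rel T).
Hypothesis esym : symmetric e.
Hypothesis eirr : irreflexive e.
Hypothesis econ : connected_graph e.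
Variable H : T -> {set T}.

Definition NH a := [set y | [exists x in H a, (x == y) || e x y]].
Definition Xc := [set q : T * T | q.2 \in NH q.1].

Lemma covers_hub :
  (forall a b, a != b -> ~~ e a b ->
     exists2 s, (s \in H a) && (s \in H b) & dist e a s + dist e s b = dist e a b) ->
  covers e Xc.
Proof.
move=> Hh; apply/forallP => -[a b]; apply/implyP => Hne.
have := Hne; rewrite inE /= => /andP[ab nab].
have [s /andP[sa sb] Hs] := Hh a b ab nab.
have Hd : 1 < dist e a b.
  rewrite ltnNge; apply/negP => /(dist_le1 econ); by rewrite (negbTE ab) (negbTE nab).
have dsym := dist_sym esym econ.
have dtri := dist_tri econ.
have daa := distuu econ.
have inNH x y c : x \in H c -> (x == y) || e x y -> y \in NH c.
  by move=> Hx Hxy; rewrite inE; apply/existsP; exists x; rewrite Hx.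
have ss x : (x == x) || e x x by rewrite eqxx.
set i := dist e a s in Hs; set j := dist e s b in Hs.
have Hj : dist e b s = j by rewrite dsym.
case: (ltnP (j.+1) i) => [Hji|Hij].
  apply/existsP; exists (a, s); rewrite inE /= (inNH s s a sa (ss s)) /=.
  rewrite /Sset inE Hne /= daa Hj; apply/orP; left; lia.
case: (ltnP (i.+1) j) => [Hij2|Hji2].
  apply/existsP; exists (b, s); rewrite inE /= (inNH s s b sb (ss s)) /=.
  rewrite /Sset inE Hne /= daa Hj; apply/orP; right; lia.
case: (leqP j i) => Hle.
  have Hj1 : j = j.-1.+1 by lia.
  have [p Eps Hp] := dist_pred econ (etrans Hj Hj1).
  have Hap := dtri a p b; rewrite (dsym p b) Hp -Hs in Hap.
  apply/existsP; exists (a, p); rewrite inE /= (inNH s p a sa) /=; last by rewrite esym Eps orbT.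
  rewrite /Sset inE Hne /= daa Hp; apply/orP; left; lia.
have Hi1 : i = i.-1.+1 by lia.
have [p Eps Hp] := dist_pred econ (Hi1 : dist e a s = _).
have Hbp := dtri b p a; rewrite (dsym p a) Hp (dsym b a) -Hs in Hbp.
apply/existsP; exists (b, p); rewrite inE /= (inNH s p b sb) /=; last by rewrite esym Eps orbT.
rewrite /Sset inE Hne /= daa Hp; apply/orP; right; lia.
Qed.

Lemma card_NH a : #|NH a| <= #|H a| * (max_degree e).+1.
Proof.
have -> : NH a = \bigcup_(x in H a) (x |: [set y | e x y]).
  apply/setP => y; rewrite inE; apply/existsP/bigcupP => [[x /andP[Hx Hxy]]|[x Hx]].
    by exists x => //; rewrite !inE eq_sym.
  by rewrite !inE => Hy; exists x; rewrite Hx eq_sym.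
apply: leq_trans (card_bigcup_leq _ _) _; rewrite -sum_nat_const leq_sum // => x _.
rewrite cardsU1 -add1n; apply: leq_add; first exact: leq_b1.
rewrite /max_degree; exact: (@leq_bigmax T (fun v => #|[set w | e v w]|) x).
Qed.

Lemma card_Xc : #|Xc| <= \sum_a #|NH a|.
Proof.
have Hsub : Xc \subset \bigcup_a [set (a, y) | y in NH a].
  apply/subsetP => -[a y]; rewrite inE /= => Hy.
  by apply/bigcupP; exists a => //; apply/imsetP; exists y.
apply: leq_trans (subset_leq_card Hsub) _.
apply: leq_trans (card_bigcup_leq _ _) _; apply: leq_sum => a _.
exact: leq_imset_card.
Qed.

End Cover.

Lemma OPT_le (T : finType) (e : rel T) (X : {set T * T}) : covers e X -> OPT e <= #|X|.
Proof.
move=> HX; rewrite /OPT.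
have : X \in index_enum {set T * T} by rewrite mem_index_enum.
elim: (index_enum _) => [//|Y r IH]; rewrite inE big_cons => /orP[/eqP<-|/IH H].
  by rewrite HX geq_minl.
by case: (covers e Y) => //; rewrite geq_min H orbT.
Qed.



Notation restr R S := [rel x y | [&& R x y, x \in S & y \in S]].

Definition conn (I : finType) (R : rel I) (S : {set I}) : Prop :=
  forall x y, x \in S -> y \in S -> connect (restr R S) x y.

Lemma path_restr (I : finType) (R : rel I) (S : {set I}) x p :
  path R x p -> {subset x :: p <= S} -> path (restr R S) x p.
Proof.
elim: p x => [//|y p IH] x /= /andP[Rxy Hp] Hs.
apply/andP; split.
  by rewrite /= Rxy (Hs x) ?(Hs y) // !inE eqxx ?orbT.
apply: IH => // z Hz; by apply: Hs; rewrite inE Hz orbT.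
Qed.

Lemma path_restr_mem (I : finType) (R : rel I) (S : {set I}) x p :
  path (restr R S) x p -> {subset p <= S}.
Proof.
elim: p x => [//|y p IH] x /= /andP[/and3P[_ _ Hy] Hp] z.
by rewrite inE => /orP[/eqP->//|]; apply: IH; apply: Hp.
Qed.

Lemma path_restr_sub (I : finType) (R : rel I) (S : {set I}) x p :
  path (restr R S) x p -> path R x p.
Proof. by apply: sub_path => a b /and3P[]. Qed.

Section Tree.
Variables (I : finType) (r : rel I).
Hypothesis rsym : symmetric r.
Hypothesis rirr : irreflexive r.
Hypothesis racyc : forall c : seq I, uniq c -> 2 < size c -> ~~ cycle r c.

Lemma restr_sym (S : {set I}) : symmetric (restr r S).
Proof. by move=> x y /=; rewrite rsym; case: (x \in S); case: (y \in S); rewrite ?andbF. Qed.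

Definition is_leaf (N : {set I}) (l p : I) :=
  [&& l \in N, p \in N, r l p & [forall q, (q \in N) && r l q ==> (q == p)]].

Lemma has_nb (N : {set I}) x y : conn r N -> x \in N -> y \in N -> x != y ->
  exists2 z, z \in N & r x z.
Proof.
move=> Hc Hx Hy xy; have /connectP[[|z p] Hp Hl] := Hc x y Hx Hy.
  by rewrite Hl eqxx in xy.
by move: Hp => /= /andP[/and3P[Rxz _ Hz] _]; exists z.
Qed.

Lemma leaf_ex (N : {set I}) : 1 < #|N| -> conn r N -> exists l p, is_leaf N l p.
Proof.
move=> HN Hc.
have [x0 Hx0] : exists x, x \in N by apply/card_gt0P; lia.
have Hnb x : x \in N -> exists2 z, z \in N & r x z.
  move=> Hx; have [y Hy xy] : exists2 y, y \in N & x != y.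
    have := cardsD1 x N; rewrite Hx => Hc1.
    have /card_gt0P[y] : 0 < #|N :\ x| by lia.
    by rewrite !inE => /andP[Hxy Hy]; exists y; rewrite // eq_sym.
  exact: has_nb Hc Hx Hy xy.
case: (boolP [exists l, exists p, is_leaf N l p]) => [/existsP[l /existsP[p H]]|]; first by exists l, p.
rewrite negb_exists => /forallP Hnl; exfalso.
have Hnl2 x y : x \in N -> y \in N -> r x y -> exists2 q, (q \in N) && r x q & q != y.
  move=> Hx Hy Rxy; have := Hnl x; rewrite negb_exists => /forallP /(_ y).
  rewrite /is_leaf Hx Hy Rxy /= negb_forall => /existsP[q].
  by rewrite negb_imply => /andP[Hq Hqy]; exists q.
suff Hk k : exists x p, [/\ x \in N, path (restr r N) x p, uniq (x :: p) & size p = k.+1].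
  have [x [p [_ _ Hu Hs]]] := Hk #|I|.
  have := card_uniqP Hu; rewrite /= Hs => Hc2.
  by have := max_card (mem (x :: p)); rewrite Hc2; lia.
elim: k => [|k [x [p [Hx Hp Hu Hs]]]].
  have [z Hz Rxz] := Hnb x0 Hx0; exists x0, [:: z]; split => //=.
    by rewrite Rxz Hx0 Hz.
  by rewrite inE andbT; apply/eqP => E; rewrite E rirr in Rxz.
case: p Hp Hu Hs => [//|y p] Hp Hu Hs.
have Hy : y \in N by move: Hp => /= /andP[/and3P[_ _ Hy] _].
have Rxy : r x y by move: Hp => /= /andP[/and3P[Rxy _ _] _].
have [q /andP[Hq Rxq] qy] := Hnl2 x y Hx Hy Rxy.
case Hin: (q \in x :: y :: p).
  exfalso.
  have qx : q != x by apply/eqP => E; rewrite E rirr in Rxq.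
  move: Hin; rewrite inE (negbTE qx) /= => Hin.
  set s := y :: p in Hin Hp Hu.
  set i := index q s.
  have Hi : i < size s by rewrite index_mem.
  have Hi1 : 0 < i by rewrite /i /s /= eq_sym (negbTE qy).
  have Ht := take_nth x Hi; rewrite nth_index // in Ht.
  have Hu2 : uniq (x :: take i.+1 s) by have := take_uniq i.+2 Hu.
  have Hsz : 2 < size (x :: take i.+1 s).
    rewrite /= size_take; case: ifP => H1; first by rewrite !ltnS.
    by rewrite ltnS; exact: leq_ltn_trans Hi1 Hi.
  have := racyc Hu2 Hsz; apply/negP/negPn.
  rewrite Ht /= rcons_path last_rcons rsym Rxq andbT -Ht.
  by apply: take_path; apply: path_restr_sub Hp.
exists q, (x :: y :: p); split => //.
  by rewrite /= rsym Rxq Hq Hx /= Rxy Hy; move: Hp => /= /andP[].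
  by rewrite /= Hin; exact: Hu.
by rewrite /=; move: Hs => /= ->.
Qed.

Lemma leaf_eq (N : {set I}) l p q : is_leaf N l p -> q \in N -> r l q -> q = p.
Proof. by move=> /and4P[_ _ _ /forallP H] Hq Rlq; have := H q; rewrite Hq Rlq => /eqP. Qed.

Lemma leaf_in (N S : {set I}) l p w : is_leaf N l p -> S \subset N -> conn r S ->
  l \in S -> w \in S -> w != l -> p \in S.
Proof.
move=> Hl HSN Hc lS wS wl.
have lw : l != w by rewrite eq_sym.
have [z zS Rlz] := has_nb Hc lS wS lw.
by rewrite -(leaf_eq Hl (subsetP HSN _ zS) Rlz).
Qed.

Lemma conn_del (N S : {set I}) l p : is_leaf N l p -> S \subset N -> conn r S ->
  conn r (S :\ l).
Proof.
move=> Hl HSN Hc x y; rewrite !inE => /andP[xl xS] /andP[yl yS].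
have /connectP[P HP HyP] := Hc x y xS yS.
case: (shortenP HP) HyP => p' Hp' Hu _ Hyl.
have lp' : l \notin p'.
  apply/negP => /splitPr Hsp; move: Hsp Hp' Hu Hyl => [p1 p2] Hp' Hu Hyl.
  rewrite cat_path /= in Hp'; move: Hp' => /and3P[_ /and3P[R1 L1S _] Hp2].
  have E1 : last x p1 = p.
    by apply: (leaf_eq Hl (subsetP HSN _ L1S)); rewrite rsym.
  case: p2 Hp2 Hu Hyl => [|z p3] Hp2 Hu Hyl.
    by move: Hyl; rewrite last_cat /= => Hyl; rewrite Hyl eqxx in yl.
  move: Hp2 => /= /andP[/and3P[Rlz _ zS] _].
  have E2 : z = p by apply: (leaf_eq Hl (subsetP HSN _ zS)).
  move: Hu; rewrite -cat_cons cat_uniq => /and3P[_ /hasPn H _].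
  have := H z; rewrite !inE eqxx orbT => /(_ isT); apply/negP/negPn.
  by have := mem_last x p1; rewrite E1 -E2 inE.
apply/connectP; exists p'; last by [].
apply: path_restr; first exact: path_restr_sub Hp'.
move=> z; rewrite inE => /orP[/eqP->|zp]; first by rewrite !inE xl xS.
rewrite !inE (path_restr_mem Hp' zp) andbT; apply/negP => /eqP E.
by rewrite -E zp in lp'.
Qed.

Lemma helly (J : finType) n : forall (F : J -> {set I}) (N : {set I}),
  #|N| <= n -> N != set0 -> conn r N ->
  (forall j, [/\ F j != set0, F j \subset N & conn r (F j)]) ->
  (forall j k, F j :&: F k != set0) ->
  exists2 c, c \in N & forall j, c \in F j.
Proof.
elim: n => [|n IH] F N Hn HN0 HcN HF Hint.
  by move: Hn; rewrite leqn0 cards_eq0 (negbTE HN0).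
have [c cN] := set0Pn _ HN0.
case: (leqP #|N| 1) => HN1.
  exists c => // j; have [/set0Pn[z zF] HFN _] := HF j.
  have zN := subsetP HFN _ zF.
  by rewrite (card_le1_eqP HN1 z c zN cN).
have [l [p Hl]] := leaf_ex HN1 HcN.
have /and4P[lN pN Rlp _] := Hl.
have pl : p != l by apply/eqP => E; rewrite E rirr in Rlp.
case: (boolP [exists j, F j \subset [set l]]) => [/existsP[j Hj]|].
  exists l => // k; have /set0Pn[z] := Hint j k; rewrite inE => /andP[zj zk].
  by have := subsetP Hj _ zj; rewrite inE => /eqP <-.
rewrite negb_exists => /forallP Hnj.
have Hw j : exists2 w, w \in F j & w != l.
  by have /subsetPn[w wF] := Hnj j; rewrite inE => wl; exists w.
have := IH (fun j => F j :\ l) (N :\ l).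
case.
- by move: Hn; rewrite (cardsD1 l N) lN; lia.
- by apply/set0Pn; exists p; rewrite !inE pl.
- by apply: conn_del Hl (subxx _) HcN.
- move=> j; have [_ HFN HcF] := HF j; have [w wF wl] := Hw j; split.
  + by apply/set0Pn; exists w; rewrite !inE wl.
  + by apply: setSD.
  + by apply: conn_del Hl HFN HcF.
- move=> j k; have /set0Pn[z] := Hint j k; rewrite inE => /andP[zj zk].
  case: (eqVneq z l) => [E|zl].
    have [_ HFj Hcj] := HF j; have [_ HFk Hck] := HF k.
    have [wj wjF wjl] := Hw j; have [wk wkF wkl] := Hw k.
    have lj : l \in F j by rewrite -E.
    have lk : l \in F k by rewrite -E.
    have pj := leaf_in Hl HFj Hcj lj wjF wjl.
    have pk := leaf_in Hl HFk Hck lk wkF wkl.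
    by apply/set0Pn; exists p; rewrite !inE pl pj pk.
  by apply/set0Pn; exists z; rewrite !inE zl zj zk.
move=> c' c'N Hc'; exists c'; first by move: c'N; rewrite inE => /andP[].
by move=> j; have := Hc' j; rewrite inE => /andP[].
Qed.

End Tree.



Definition gcomp (T : finType) (e : rel T) (S : {set T}) (v : T) : {set T} :=
  [set y in S | connect (restr e S) v y].

Section Sep.
Variables (T : finType) (e : rel T).
Hypothesis esym : symmetric e.
Variables (I : finType) (r : rel I) (B : I -> {set T}).
Hypothesis Htd : tree_decomposition e r B.

Definition Uc (C : {set T}) := [set k | [exists x in C, x \in B k]].

Lemma Uc_conn S v : conn r (Uc (gcomp e S v)).
Proof.
have [_ Hcov Hedge Hsub] := Htd.
set C := gcomp e S v.
have sub x : x \in C -> forall k1 k2, x \in B k1 -> x \in B k2 ->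
    connect (restr r (Uc C)) k1 k2.
  move=> xC k1 k2 H1 H2; move: (Hsub x k1 k2 H1 H2); apply: connect_sub.
  move=> a b /and3P[Rab xa xb]; apply: connect1; rewrite /= Rab !inE /=.
  by apply/andP; split; apply/existsP; exists x; rewrite xC.
move=> k1 k2; rewrite !inE => /existsP[x1 /andP[x1C x1k]] /existsP[x2 /andP[x2C x2k]].
have Hc : connect (restr e S) x1 x2.
  move: x1C x2C; rewrite !inE => /andP[_ H1] /andP[_ H2].
  eapply connect_trans; last exact: H2; rewrite (sym_connect_sym (restr_sym esym S)) //.
case/connectP: Hc => P HP E; rewrite E in x2k; clear E x2C.
elim: P x1 k1 x1C x1k HP x2k => [|y P IH] x1 k1 x1C x1k /=; first by move=> _ H; apply: (sub _ x1C _ _ x1k H).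
move=> /andP[/and3P[Exy _ yS] HP] Hl.
have [k /andP[x1kk ykk]] := Hedge _ _ Exy.
have yC : y \in C.
  move: x1C; rewrite !inE yS => /andP[x1S Hv]; eapply connect_trans; first exact: Hv.
  by apply: connect1; rewrite /= Exy x1S yS.
eapply connect_trans; first exact: (sub _ x1C _ _ x1k x1kk).
exact: (IH y k yC ykk HP Hl).
Qed.

Lemma sep_ex (x0 : T) (K : {set T}) :
  exists i, forall v, 2 * #|gcomp e (K :\: B i) v| <= #|K|.
Proof.
have [[rsym rirr rcon racyc] Hcov Hedge Hsub] := Htd.
case: (boolP [exists i, [forall v, 2 * #|gcomp e (K :\: B i) v| <= #|K|]]).
  by move=> /existsP[i /forallP H]; exists i.
rewrite negb_exists => /forallP Hno; exfalso.
have Hex i : exists v, #|K| < 2 * #|gcomp e (K :\: B i) v|.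
  have := Hno i; rewrite negb_forall => /existsP[v]; rewrite -ltnNge => H; by exists v.
pose vf i := odflt x0 [pick v | #|K| < 2 * #|gcomp e (K :\: B i) v|].
have Hbig i : #|K| < 2 * #|gcomp e (K :\: B i) (vf i)|.
  rewrite /vf; case: pickP => [v //|H0]; have [v Hv] := Hex i; by rewrite H0 in Hv.
pose C i := gcomp e (K :\: B i) (vf i).
have CK i : C i \subset K.
  by apply/subsetP => x; rewrite !inE => /andP[/andP[]].
have CB i x : x \in C i -> x \notin B i.
  by rewrite !inE => /andP[/andP[]].
have Cne i : exists x, x \in C i.
  apply/set0Pn; rewrite -card_gt0; have := Hbig i; rewrite /C; lia.
have [i0 _] := Hcov x0.
have := @helly I r rsym rirr racyc I #|[set: I]| (fun i => Uc (C i)) [set: I].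
case.
- by [].
- by apply/set0Pn; exists i0.
- move=> i j _ _; rewrite (@eq_connect _ _ r) ?rcon // => a b /=; by rewrite !inE !andbT.
- move=> i; split.
  + have [x xC] := Cne i; have [k xk] := Hcov x.
    by apply/set0Pn; exists k; rewrite inE; apply/existsP; exists x; rewrite xC.
  + exact: subsetT.
  + exact: Uc_conn.
- move=> i j.
  have Hij : C i :&: C j != set0.
    rewrite -card_gt0; have H1 := Hbig i; have H2 := Hbig j.
    have H3 := cardsUI (C i) (C j).
    have H4 : #|C i :|: C j| <= #|K| by apply: subset_leq_card; rewrite subUset CK CK.
    move: H1 H2 H3 H4; rewrite /C; lia.
  have /set0Pn[x] := Hij; rewrite inE => /andP[xi xj].
  have [k xk] := Hcov x.
  by apply/set0Pn; exists k; rewrite !inE; apply/andP; split; apply/existsP; exists x; rewrite ?xi ?xj.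
move=> c _ Hc; have := Hc c; rewrite inE => /existsP[x /andP[xC xB]].
by have := CB c x xC; rewrite xB.
Qed.

End Sep.


Lemma path_connect (T : finType) (R : rel T) a p y :
  path R a p -> y \in a :: p -> connect R a y.
Proof.
elim: p a => [|z p IH] a /=; first by rewrite inE => _ /eqP->.
move=> /andP[Raz Hp]; rewrite inE => /orP[/eqP->//|Hy].
eapply connect_trans; first exact: connect1 Raz.
exact: IH.
Qed.

Section Hub.
Variables (T : finType) (e : rel T).
Hypothesis esym : symmetric e.
Hypothesis econ : connected_graph e.
Variable sep : {set T} -> {set T}.
Hypothesis Hsep : forall K v, 2 * #|gcomp e (K :\: sep K) v| <= #|K|.

Definition lgT := trunc_log 2 #|T|.

Fixpoint Kseq (a : T) (m : nat) : {set T} :=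
  match m with
  | 0 => setT
  | m'.+1 => gcomp e (Kseq a m' :\: sep (Kseq a m')) a
  end.

Definition Hhub a := \bigcup_(m < lgT.+1) sep (Kseq a m).

Lemma Ksize a m : 2 ^ m * #|Kseq a m| <= #|T|.
Proof.
elim: m => [|m IH] /=; first by rewrite cardsT mul1n.
apply: leq_trans IH; rewrite expnS -mulnA mulnCA leq_mul2l.
by rewrite Hsep orbT.
Qed.

Lemma Kin a m : a \in Kseq a m -> m <= lgT.
Proof.
move=> Ha; apply: trunc_log_max => //.
apply: leq_trans (Ksize a m); rewrite -{1}[2 ^ m]muln1 leq_mul2l card_gt0 orbC.
by apply/orP; left; apply/set0Pn; exists a.
Qed.

Lemma gcomp_eq (S : {set T}) a b : connect (restr e S) a b -> gcomp e S a = gcomp e S b.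
Proof.
have Hs := sym_connect_sym (restr_sym esym S).
move=> Hab; apply/setP => y; rewrite !inE; congr (_ && _); apply/idP/idP => H.
  by eapply connect_trans; last exact: H; rewrite Hs.
by eapply connect_trans; first exact: Hab.
Qed.

Lemma hub_step a b p : path e a p -> last a p = b -> forall d m, lgT.+1 - m <= d ->
  Kseq a m = Kseq b m -> {subset a :: p <= Kseq a m} ->
  exists2 s, s \in a :: p & (s \in Hhub a) && (s \in Hhub b).
Proof.
move=> Hp Hl d; elim: d => [|d IH] m Hd Eab Hsub.
  have := Kin (Hsub a (mem_head _ _)); lia.
have Hm := Kin (Hsub a (mem_head _ _)).
set K := Kseq a m in Eab Hsub.
case: (boolP (has (mem (sep K)) (a :: p))) => [/hasP[s Hs sX]|Hno].
  exists s => //; apply/andP; split; apply/bigcupP; exists (Ordinal (n := lgT.+1) (m := m) (leq_ltn_trans Hm (ltnSn _))) => //=.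
  by rewrite -Eab.
have Hsub2 : {subset a :: p <= K :\: sep K}.
  move=> y Hy; rewrite inE Hsub // andbT; apply/negP => Hy2.
  by move/hasP: Hno; apply; exists y.
have Hpr := path_restr Hp Hsub2.
have Hcb : connect (restr e (K :\: sep K)) a b.
  by rewrite -Hl; apply: path_connect Hpr _; apply: mem_last.
apply: (IH m.+1); first lia.
  by rewrite /= -/K -Eab (gcomp_eq Hcb).
move=> y Hy; rewrite /= -/K inE Hsub2 //=.
exact: path_connect Hpr Hy.
Qed.

Lemma hub_prop a b : exists2 s, (s \in Hhub a) && (s \in Hhub b) &
  dist e a s + dist e s b = dist e a b.
Proof.
have [p [Hp Hl Hs]] := ball_path (dist_ball econ a b).
have [s Hsp Hsh] := hub_step Hp Hl (leqnn (lgT.+1 - 0)) (erefl _) (fun y _ => in_setT y).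
exists s => //; apply/eqP; rewrite eqn_leq dist_tri // andbT.
case: (splitPl Hsp) Hp Hl Hs => p1 p2 Hls.
rewrite cat_path Hls => /andP[Hp1 Hp2]; rewrite last_cat Hls size_cat => Hl Hs.
have := path_dist econ Hp1; rewrite Hls => H1.
have := path_dist econ Hp2; rewrite Hl => H2.
lia.
Qed.

Lemma card_Hhub tw a : (forall K, #|sep K| <= tw.+1) -> #|Hhub a| <= lgT.+1 * tw.+1.
Proof.
move=> Hk; apply: leq_trans (card_bigcup_leq _ _) _.
have H : \sum_(m < lgT.+1) #|sep (Kseq a m)| <= \sum_(m < lgT.+1) tw.+1.
  by apply: leq_sum => m _; apply: Hk.
by apply: leq_trans H _; rewrite sum_nat_const card_ord.
Qed.

End Hub.


Theorem theorem7 :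
  exists C : nat,
    forall (T : finType) (e : rel T) (tw : nat),
      simple_graph e -> connected_graph e -> is_treewidth e tw ->
      let n := #|T| in
      let D := max_degree e in
      let lg := trunc_log 2 n in
      OPT e <= C * (D * (D + tw * lg) * n * lg).
Proof.
exists 8 => T e tw [esym eirr] econ [[I [r [B [Htd Hw]]]] _].
rewrite [X in is_true X]/=.
set n := #|T|; set D := max_degree e; set lg := trunc_log 2 n.
case: (leqP n 1) => Hn.
  have -> : OPT e = 0.
    apply/eqP; rewrite -leqn0; apply: (leq_trans (OPT_le (X := set0) _)); last by rewrite cards0.
    apply/forallP => -[a b]; apply/implyP; rewrite inE /= => /andP[ab _].
    by have E := card_le1_eqP Hn a b isT isT; rewrite E eqxx in ab.
  by [].
have [x0 _] : exists x : T, x \in setT by apply/set0Pn; rewrite -card_gt0 cardsT; rewrite /n in Hn; lia.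
have [u [v [uv Euv]]] : exists u v, u != v /\ e u v.
  have [y Hy] : exists y, y != x0.
    have := cardsD1 x0 setT; rewrite in_setT cardsT => H.
    have /card_gt0P[y] : 0 < #|setT :\ x0| by rewrite /n in Hn; lia.
    by rewrite !inE => /andP[H1 _]; exists y.
  have Hd : dist e x0 y != 0 by rewrite (dist0 econ) eq_sym.
  have Hpos : 0 < dist e x0 y by rewrite lt0n.
  have [w Ewy _] := dist_pred econ (Logic.eq_sym (prednK Hpos)).
  exists w, y; split => //; apply/eqP => E; by rewrite E eirr in Ewy.
have [[rsym rirr rcon racyc] Hcov Hedge Hsub] := Htd.
have Hbag i : #|B i| <= tw.+1.
  have := @leq_bigmax I (fun i => #|B i|) i; rewrite /td_width in Hw; lia.
have Htw : 1 <= tw.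
  have [i /andP[ui vi]] := Hedge u v Euv.
  have : 1 < #|B i|.
    rewrite (cardsD1 u) ui ltnS card_gt0; apply/set0Pn; exists v; by rewrite !inE eq_sym uv.
  have := @leq_bigmax I (fun i => #|B i|) i; rewrite /td_width in Hw; lia.
have HD : 1 <= D.
  have := @leq_bigmax T (fun v => #|[set w | e v w]|) u; rewrite -/(max_degree e) -/D.
  suff : 0 < #|[set w | e u w]| by lia.
  by rewrite card_gt0; apply/set0Pn; exists v; rewrite inE.
have Hlg : 1 <= lg by apply: trunc_log_max.
have Hsep K : exists i, [forall v, 2 * #|gcomp e (K :\: B i) v| <= #|K|].
  by have [i Hi] := sep_ex esym Htd x0 K; exists i; apply/forallP.
pose sep K := B (xchoose (Hsep K)).
have Hsep1 K w : 2 * #|gcomp e (K :\: sep K) w| <= #|K|.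
  by have /forallP := xchooseP (Hsep K); apply.
have Hcov' := covers_hub esym econ (fun a b _ _ => hub_prop esym econ Hsep1 a b).
apply: leq_trans (OPT_le Hcov') _.
apply: leq_trans (card_Xc _ _) _.
have H1 a : #|NH e (Hhub e sep) a| <= lg.+1 * tw.+1 * D.+1.
  apply: leq_trans (card_NH _ _ _) _; rewrite -/D leq_mul2r; apply/orP; right.
  exact: (card_Hhub e a (fun K => Hbag _)).
have H2 : \sum_a #|NH e (Hhub e sep) a| <= \sum_(a : T) lg.+1 * tw.+1 * D.+1.
  by apply: leq_sum => a _; apply: H1.
apply: leq_trans H2 _; rewrite sum_nat_const -/n.
clearbody n D lg.
have E1 : lg.+1 * tw.+1 * D.+1 <= (2 * lg) * (2 * tw) * (2 * D).
  by apply: leq_mul; [apply: leq_mul|]; lia.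
apply: leq_trans (leq_mul (leqnn n) E1) _.
have E2 : tw <= tw * lg by rewrite leq_pmulr.
have E3 : tw * lg <= D + tw * lg by rewrite leq_addl.
have E4 : D * tw * n * lg <= D * (D + tw * lg) * n * lg.
  by rewrite !leq_mul2r leq_mul2l (leq_trans E2 E3) !orbT.
apply: leq_trans _ (leq_mul (leqnn 8) E4).
nia.
Qed.
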